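(* Let $G$ be a torsion-free group, $\mathbb{F}$ a field, $\mathsf{a}$ a unit in $\mathbb{F}[G]$ with $|supp(\mathsf{a})|=4$ and $|S_{\mathsf{a}}|=12$, and let $\mathsf{b}\in\mathbb{F}[G]$ with $\mathsf{a}\mathsf{b}=1$. Then $U(\mathsf{a},\mathsf{b})$ is the induced subgraph on the vertex set $supp(\mathsf{b})$ of the Cayley graph of $G$ with respect to $S_{\mathsf{a}}$.
   Context: $supp(\gamma)=\{x\in G:\gamma_x\ne0\}$; $S_{\mathsf{a}}=\{h^{-1}h':h\ne h',\ h,h'\in supp(\mathsf{a})\}$. The unit graph $U(\mathsf{a},\mathsf{b})$ is the multigraph with vertex set $supp(\mathsf{b})$ whose edges are the sets $\{(h,h',g,g'),(h',h,g',g)\}$ with $h,h'\in supp(\mathsf{a})$, $g,g'\in supp(\mathsf{b})$, $g\ne g'$, $hg=h'g'$, each joining $g$ and $g'$. The Cayley graph of $G$ with respect to an inverse-closed $S\not\ni 1$ is the simple graph on $G$ in which $x,y$ are adjacent iff $xy^{-1}\in S$. *)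

(* Defs.v *)
From HB Require Import structures.
From mathcomp Require Import all_boot all_algebra.
From mathcomp Require Import finmap.
From mathcomp Require Import classical_sets.
Set Implicit Arguments. Unset Strict Implicit. Unset Printing Implicit Defensive.
Import GRing.Theory.
Local Open Scope fset_scope.

Definition torsion_free (G : groupType) : Prop :=
  forall (x : G) (n : nat), (0 < n)%N -> (x ^+ n)%g = 1%g -> x = 1%g.

Notation group_alg G F := {fsfun G -> F with (0 : F)%R}.

Definition supp (G : groupType) (F : fieldType) (g : group_alg G F) : {fset G} :=
  finsupp g.

Definition ga_mul (G : groupType) (F : fieldType) (a b : group_alg G F) : G -> F :=
  fun x => (\sum_(h <- supp a) a h * b ((h^-1) * x)%g)%R.

Definition ga_one (G : groupType) (F : fieldType) : G -> F :=
  fun x => ((x == 1%g)%:R)%R.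

Definition ga_unit (G : groupType) (F : fieldType) (a : group_alg G F) : Prop :=
  exists c : group_alg G F, ga_mul a c =1 @ga_one G F /\ ga_mul c a =1 @ga_one G F.

Definition S_set (G : groupType) (F : fieldType) (a : group_alg G F) : {fset G} :=
  [fset ((p.1)^-1 * p.2)%g | p in (supp a `*` supp a) & p.1 != p.2].

Definition cayley_adj (G : groupType) (S : {fset G}) (x y : G) : bool :=
  (x * y^-1)%g \in S.

(** Unit graph U(a,b): multigraph on supp b.  Its edges are the sets
    {(h,h',g,g'), (h',h,g',g)} with h,h' in supp a, g,g' in supp b, g <> g',
    hg = h'g'; such an edge joins g and g'. *)
Definition uedge (G : groupType) (h h' g g' : G) : set (G * G * G * G) :=
  [set (h, h', g, g'); (h', h, g', g)].

Definition U_edge (G : groupType) (F : fieldType) (a b : group_alg G F)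
    (E : set (G * G * G * G)) : Prop :=
  exists h h' g g' : G,
    [/\ h \in supp a, h' \in supp a, g \in supp b & g' \in supp b] /\
    [/\ g != g', (h * g = h' * g')%g & E = uedge h h' g g'].

Definition U_joins (G : groupType) (E : set (G * G * G * G)) (x y : G) : Prop :=
  exists h h' : G, E = uedge h h' x y.

(** The multigraph U(a,b) (vertex set supp b) is the induced subgraph on
    supp b of the Cayley graph Cay(G, S): two vertices are joined by an edge
    of U iff they are adjacent in the Cayley graph, and no two distinct edges
    of U join the same pair of vertices. *)
Definition U_is_induced_cayley (G : groupType) (F : fieldType)
    (a b : group_alg G F) (S : {fset G}) : Prop :=
  (forall x y : G, x \in supp b -> y \in supp b ->
     (cayley_adj S x y <-> exists E, U_edge a b E /\ U_joins E x y)) /\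
  (forall (E E' : set (G * G * G * G)) (x y : G),
     U_edge a b E -> U_edge a b E' -> U_joins E x y -> U_joins E' x y -> E = E').

(* Main.v *)
Require Import Defs.
From HB Require Import structures.
From mathcomp Require Import all_boot all_algebra.
From mathcomp Require Import finmap.
From mathcomp Require Import classical_sets.
Local Open Scope fset_scope.

Section S.
Variable K : choiceType.
Lemma card_enum (A : {fset K}) : size (enum_finmem (mem A)) = #|`A|.
Proof.
apply: perm_size; apply: uniq_perm; first exact: enum_finmem_uniq.
  exact: fset_uniq.
by move=> x; rewrite enum_finmemE.
Qed.
Lemma cardM (A B : {fset K}) : #|` A `*` B| = (#|`A| * #|`B|)%N.
Proof.
rewrite /fsetM (perm_size (enum_imfset2 _ _)).
  rewrite size_allpairs_dep card_enum -(card_enum A).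
  by elim: (enum_finmem _) => [|x s IH] //=; rewrite IH mulSn.
by move=> [x1 y1] [x2 y2] _ _ /= [-> ->].
Qed.
Lemma cardD (A : {fset K}) :
  #|` [fset p in A `*` A | p.1 != p.2]| = (#|`A| * #|`A| - #|`A|)%N.
Proof.
have -> : [fset p in A `*` A | p.1 != p.2] = (A `*` A) `\` [fset (x, x) | x in A].
  apply/fsetP => p; rewrite !inE /=.
  apply/andP/andP => [[H2 H3]|[H1 H2]].
    split; last by [].
    apply/negP => /imfsetP [x /= _ Hx]; by rewrite Hx eqxx in H3.
  split; first by []. apply/negP => E; case/negP: H1; apply/imfsetP.
  exists p.1; first by case/andP: H2. by clear H2; case: p E => x y /= /eqP ->.
rewrite cardfsDS.
  rewrite cardM card_in_imfset ?card_enum //. by move=> x y _ _ [].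
apply/fsubsetP => p /imfsetP [x /= Hx ->]; by rewrite !inE /= Hx.
Qed.
End S.

Section M.
Variables (G : groupType) (F : fieldType).

Lemma eq1 (h h' x y : G) : (x * y^-1 = h^-1 * h')%g -> (h * x = h' * y)%g.
Proof.
move=> E.
have := congr1 (fun z => h * z * y)%g E => /=.
by rewrite -!mulgA mulVg mulg1 !mulgA mulgV mul1g.
Qed.

Lemma eq2 (h h' x y : G) : (h * x = h' * y)%g -> (x * y^-1 = h^-1 * h')%g.
Proof.
move=> E.
have := congr1 (fun z => h^-1 * z * y^-1)%g E => /=.
by rewrite !mulgA mulVg mul1g -!mulgA mulgV mulg1.
Qed.

Lemma inj_pairs (a : group_alg G F) :
  #|` supp a| = 4%N -> #|` S_set a| = 12%N ->
  forall h1 h1' h2 h2' : G, h1 \in supp a -> h1' \in supp a ->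
  h2 \in supp a -> h2' \in supp a -> h1 != h1' -> h2 != h2' ->
  (h1^-1 * h1' = h2^-1 * h2')%g -> h1 = h2 /\ h1' = h2'.
Proof.
move=> c4 c12 h1 h1' h2 h2' H1 H1' H2 H2' N1 N2 E.
pose f := fun p : G * G => (p.1^-1 * p.2)%g.
pose D := [fset p in supp a `*` supp a | p.1 != p.2].
have SE : S_set a = f @` D.
  apply/fsetP => z; apply/imfsetP/imfsetP => [[p Hp ->]|[p Hp ->]];
    exists p => //; move: Hp; rewrite !inE //.
have cD : #|` D| = 12%N by rewrite cardD c4.
have : #|` f @` D| == #|` D| by rewrite -SE c12 cD.
move/card_in_imfsetP => finj.
have := finj (h1, h1') (h2, h2').
rewrite !inE /= H1 H1' H2 H2' N1 N2 => /(_ isT isT E) [-> ->]; done.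
Qed.

Lemma edge_data (a b : group_alg G F) E (x y : G) :
  U_edge a b E -> U_joins E x y ->
  exists h h' : G, [/\ h \in supp a, h' \in supp a, x != y,
     (h * x = h' * y)%g & E = uedge h h' x y].
Proof.
move=> [h1 [h1' [g [g' [[A1 A1' Bg Bg'] [Ngg' Eq EE]]]]]] [h [h' Hj]].
exists h, h'.
have : uedge h1 h1' g g' (h, h', x, y) by rewrite -EE Hj; left.
case=> -[-> -> -> ->]; split => //; first by rewrite eq_sym.
rewrite EE /uedge; apply/seteqP; split => z /=; by case=> ->; [right|left].
Qed.

End M.
Arguments edge_data {G F a b E x y}.
Arguments inj_pairs {G F a}.
Arguments eq1 {G h h' x y}.
Arguments eq2 {G h h' x y}.

Theorem mainTheorem11 (G : groupType) (F : fieldType) (a b : group_alg G F) :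
  torsion_free G ->
  ga_unit a ->
  #|` supp a| = 4%N ->
  #|` S_set a| = 12%N ->
  ga_mul a b =1 @ga_one G F ->
  U_is_induced_cayley a b (S_set a).
Proof.
move=> _ _ c4 c12 _; split.
  move=> x y Hx Hy; split.
    rewrite /cayley_adj => /imfsetP [[h h'] /=]; rewrite !inE /= => /andP [/andP [Hh Hh'] N] E.
    exists (uedge h h' x y); split; last by exists h, h'.
    exists h, h', x, y; split => //; split => //; last exact: eq1.
    apply/negP => /eqP Exy; move: E; rewrite Exy mulgV => /esym E1.
    have : (h * (h^-1 * h') = h * 1)%g by rewrite E1.
    by rewrite mulgA mulgV mul1g mulg1 => Ehh; rewrite Ehh eqxx in N.
  move=> [E [HE HJ]].
  have [h [h' [Hh Hh' Nxy Eq _]]] := edge_data HE HJ.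
  rewrite /cayley_adj (eq2 Eq); apply/imfsetP; exists (h, h') => //.
  rewrite !inE /= Hh Hh' /=; apply/negP => /eqP Ehh.
  by move: Eq; rewrite Ehh => /mulgI Exy; rewrite Exy eqxx in Nxy.
move=> E E' x y HE HE' HJ HJ'.
have [h1 [h1' [H1 H1' Nxy Eq1 ->]]] := edge_data HE HJ.
have [h2 [h2' [H2 H2' _ Eq2 ->]]] := edge_data HE' HJ'.
have N : forall h h', (h * x = h' * y)%g -> h != h'.
  move=> h h' Eq; apply/negP => /eqP Ehh.
  by move: Eq; rewrite Ehh => /mulgI Exy; rewrite Exy eqxx in Nxy.
have [-> ->] := inj_pairs c4 c12 _ _ _ _ H1 H1' H2 H2' (N _ _ Eq1) (N _ _ Eq2)
  (etrans (esym (eq2 Eq1)) (eq2 Eq2)).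
done.
Qed.
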